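(* Let $\mathcal{T}$ be a tangle of order $k$ in a connectivity system $(E,\lambda)$, and let $X$ be a $\mathcal{T}$-strong $k$-separating set in $\lambda$. If $X_1$ and $X_2$ are fully closed $k$-separating sets that contain $X$, then there is a fully closed $k$-separating set $Y$ such that $X\subseteq Y\subseteq X_1\cap X_2$.
   Context: A connectivity system is a pair $(E,\lambda)$ with $E$ finite and $\lambda$ an integer-valued symmetric ($\lambda(X)=\lambda(E-X)$) submodular ($\lambda(X)+\lambda(Y)\ge\lambda(X\cup Y)+\lambda(X\cap Y)$) function on subsets of $E$. $X$ is $k$-separating if $\lambda(X)\le k$. A tangle of order $k$ is a collection $\mathcal T$ of subsets of $E$ with (T1) $\lambda(A)<k$ for $A\in\mathcal T$; (T2) if $\lambda(A)\le k-1$ then $A\in\mathcal T$ or $E-A\in\mathcal T$; (T3) $A\cup B\cup C\ne E$ for $A,B,C\in\mathcal T$; (T4) $E-\{e\}\notin\mathcal T$ for $e\in E$. A set is $\mathcal T$-weak if contained in a member of $\mathcal T$, and $\mathcal T$-strong otherwise. A $\mathcal T$-strong $k$-separating set $X$ is fully closed (with respect to $\mathcal T$) if $X\cup Y$ is not $k$-separating for every nonempty $\mathcal T$-weak set $Y\subseteq E-X$. *)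

(* Defs.v *)
From mathcomp Require Import all_boot all_order all_algebra.
Set Implicit Arguments. Unset Strict Implicit. Unset Printing Implicit Defensive.
Import Order.TTheory GRing.Theory Num.Theory.
Local Open Scope ring_scope.

Definition connectivity_system (E : finType) (lam : {set E} -> int) : Prop :=
  (forall X : {set E}, lam X = lam (~: X)) /\
  (forall X Y : {set E}, lam (X :|: Y) + lam (X :&: Y) <= lam X + lam Y).

Definition k_separating (E : finType) (lam : {set E} -> int) (k : int)
  (X : {set E}) : Prop := lam X <= k.

Definition tangle (E : finType) (lam : {set E} -> int) (k : int)
  (T : {set {set E}}) : Prop :=
  (forall A, A \in T -> lam A < k) /\
  (forall A, lam A <= k - 1 -> A \in T \/ ~: A \in T) /\
  (forall A B C, A \in T -> B \in T -> C \in T -> A :|: B :|: C != setT) /\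
  (forall e : E, ~: [set e] \notin T).

Definition T_weak (E : finType) (T : {set {set E}}) (X : {set E}) : Prop :=
  exists2 A, A \in T & X \subset A.

Definition T_strong (E : finType) (T : {set {set E}}) (X : {set E}) : Prop :=
  ~ T_weak T X.

Definition fully_closed (E : finType) (lam : {set E} -> int) (k : int)
  (T : {set {set E}}) (X : {set E}) : Prop :=
  T_strong T X /\ k_separating lam k X /\
  (forall Y : {set E}, Y != set0 -> T_weak T Y -> Y \subset ~: X ->
     ~ k_separating lam k (X :|: Y)).

(* Main.v *)
Require Import Defs.
From mathcomp Require Import all_boot all_order all_algebra.
From mathcomp Require Import zify.
Local Open Scope ring_scope.

Lemma lamT_le (E : finType) (lam : {set E} -> int) (A : {set E}) :
  connectivity_system lam -> lam setT <= lam A.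
Proof.
move=> [hs hsub]; have := hsub A (~: A).
rewrite setUCr setICr -(hs A) (hs set0) setC0. lia.
Qed.

Lemma weak_sub (E : finType) (T : {set {set E}}) (Z W : {set E}) :
  Z \subset W -> T_weak T W -> T_weak T Z.
Proof. move=> hZW [A hA hWA]; exists A => //; exact: subset_trans hWA. Qed.

Arguments weak_sub {E T Z W}.

Lemma strong_sup (E : finType) (T : {set {set E}}) (Z W : {set E}) :
  Z \subset W -> T_strong T Z -> T_strong T W.
Proof. move=> hZW hZ hW; apply: hZ; exact: weak_sub hW. Qed.

Arguments strong_sup {E T Z W}.

Lemma key (E : finType) (lam : {set E} -> int) (k : int)
  (T : {set {set E}}) (Y X1 W : {set E}) :
  connectivity_system lam -> tangle lam k T ->
  fully_closed lam k T X1 -> Y \subset X1 -> T_strong T Y ->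
  lam Y <= k - 1 -> W != set0 -> W \subset ~: X1 -> False.
Proof.
move=> hc [t1 [t2 [t3 t4]]] [s1 [s2 s3]] hY sY lY hW hWX.
case: (t2 _ lY) => hT.
  by apply: sY; exists Y.
have wk : T_weak T (~: X1).
  by exists (~: Y) => //; rewrite setCS.
have ne : ~: X1 != set0.
  apply: contraNneq hW => e; by rewrite -subset0 -e.
apply: (s3 _ ne wk (subxx _)).
rewrite /k_separating setUCr.
have := @lamT_le _ lam Y hc. lia.
Qed.

Arguments key {E lam k T Y X1 W}.

Lemma step (E : finType) (lam : {set E} -> int) (k : int)
  (T : {set {set E}}) (Y X1 Z : {set E}) :
  connectivity_system lam -> tangle lam k T ->
  fully_closed lam k T X1 -> Y \subset X1 -> T_strong T Y ->
  T_weak T Z -> lam (Y :|: Z) <= k -> ~~ (Z \subset X1) -> False.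
Proof.
move=> hc ht hf hY sY wZ lYZ nZ.
have hf' := hf; case: hf' => [s1 [s2 s3]].
set Zo := Z :\: X1.
have neZo : Zo != set0.
  by apply: contra nZ; rewrite -setD_eq0.
have wZo : T_weak T Zo := weak_sub (subsetDl Z X1) wZ.
have sub : Zo \subset ~: X1 by rewrite /Zo setDE subsetIr.
have h1 := s3 _ neZo wZo sub.
have eU : X1 :|: Zo = (Y :|: Z) :|: X1.
  apply/setP => x; rewrite !inE.
  case hx1: (x \in X1); rewrite ?orbT ?orbF //=.
  have : x \in Y = false by apply/negbTE; apply: contraFN hx1 => /(subsetP hY).
  by move=> ->.
rewrite eU in h1.
have hsub := (proj2 hc) (Y :|: Z) X1.
have lX1 : lam X1 <= k by [].
have lI : lam ((Y :|: Z) :&: X1) <= k - 1.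
  rewrite /k_separating in h1. lia.
apply: (key hc ht hf _ _ lI neZo sub).
  exact: subsetIr.
apply: strong_sup sY; rewrite subsetI subsetUl /=; exact: hY.
Qed.

Arguments step {E lam k T Y X1 Z}.

Theorem lemma3p1 (E : finType) (lam : {set E} -> int) (k : int)
  (T : {set {set E}}) (X X1 X2 : {set E}) :
  connectivity_system lam ->
  tangle lam k T ->
  T_strong T X -> k_separating lam k X ->
  fully_closed lam k T X1 -> X \subset X1 ->
  fully_closed lam k T X2 -> X \subset X2 ->
  exists Y : {set E}, [/\ fully_closed lam k T Y, X \subset Y & Y \subset X1 :&: X2].
Proof.
move=> hc ht sX lX f1 s1 f2 s2.
pose P := fun Y : {set E} => [&& X \subset Y, Y \subset X1 :&: X2 & lam Y <= k].
have PX : P X by rewrite /P subxx subsetI s1 s2 /=; exact: lX.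
case: (@arg_maxnP _ X P (fun Y : {set E} => #|Y|) PX) => Y /and3P [hXY hYI lY] hmax.
exists Y; split => //.
have sY : T_strong T Y by apply: strong_sup sX.
split => //; split => //.
move=> Z nZ wZ hZ lYZ.
have hYI' := hYI; rewrite subsetI in hYI'; case/andP: hYI' => hY1 hY2.
case: (boolP (Z \subset X1)) => z1; last by apply: (step hc ht f1 hY1 sY wZ lYZ z1).
case: (boolP (Z \subset X2)) => z2; last by apply: (step hc ht f2 hY2 sY wZ lYZ z2).
have PYZ : P (Y :|: Z).
  rewrite /P; apply/and3P; split.
  - exact: subset_trans hXY (subsetUl _ _).
  - by rewrite subUset hYI subsetI z1 z2.
  - exact: lYZ.
have := hmax _ PYZ.
have : Y \proper Y :|: Z.
  rewrite properUl //; apply: contra nZ => hZY.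
  apply/eqP/setP => x; rewrite inE; apply/negbTE; apply/negP => hx.
  by move: (subsetP hZ x hx); rewrite inE (subsetP hZY x hx).
move/proper_card => h1 h2.
by have := leq_trans h1 h2; rewrite ltnn.
Qed.
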